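(* Let $G=(V,E)$ be a multigraph (loops and parallel edges allowed) with $n$ vertices, $m$ edges and $c(G)$ components. Then $$P(\mathcal{H}_G,\lambda)=\lambda^{m-n+2c(G)}\cdot(-1)^{n+c(G)}\cdot T_G\!\left(1-\lambda^2,\tfrac{\lambda-1}{\lambda}\right).$$
   Context: A hypergraph $\mathcal{H}=(\mathcal{V},\mathcal{E})$ consists of a finite vertex set $\mathcal{V}$ and a set $\mathcal{E}$ of subsets of $\mathcal{V}$, each of size at least $1$, called edges. For a positive integer $\lambda$, a weak proper $\lambda$-colouring of $\mathcal{H}$ is a map $\phi:\mathcal{V}\to\{1,\dots,\lambda\}$ such that $|\{\phi(v):v\in e\}|>1$ for every $e\in\mathcal{E}$. $P(\mathcal{H},\lambda)$ denotes the number of weak proper $\lambda$-colourings of $\mathcal{H}$; it is a polynomial in $\lambda$ of degree $|\mathcal{V}|$. For a multigraph $G=(V,E)$, $\mathcal{H}_G$ is the hypergraph with vertex set $V\cup\{w_e:e\in E\}$ (the $w_e$ being distinct new vertices) and edge set $\{\{u_e,v_e,w_e\}: e\in E\}$, where $u_e,v_e$ are the ends of $e$ (so a loop $e$ at $u$ gives the edge $\{u,w_e\}$). The Tutte polynomial is $T_G(x,y)=\sum_{A\subseteq E}(x-1)^{r(E)-r(A)}(y-1)^{|A|-r(A)}$, where $r(A)=|V|-c(A)$ and $c(A)$ is the number of components of the spanning subgraph $(V,A)$; $c(G)=c(E)$. *)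

(* Defs.v *)
From HB Require Import structures.
From mathcomp Require Import all_boot all_order all_algebra.
Set Implicit Arguments. Unset Strict Implicit. Unset Printing Implicit Defensive.
Import Order.TTheory GRing.Theory Num.Theory.

Definition weak_proper (W : finType) (edges : {set {set W}}) (lam : nat)
  (phi : {ffun W -> 'I_lam}) : bool :=
  [forall e in edges, 1 < #|[set phi x | x in e]| ].

Definition chrom_hyp (W : finType) (edges : {set {set W}}) (lam : nat) : nat :=
  #|[set phi : {ffun W -> 'I_lam} | @weak_proper W edges lam phi]|.

(* A multigraph: finite vertex type V, finite edge type E, and the two ends
   [u e], [v e] of each edge (a loop has u e = v e; parallel edges allowed). *)

(* The hypergraph H_G: vertices V + E (inr e is the new vertex w_e), edges
   {u_e, v_e, w_e}. *)
Definition HG_edges (V E : finType) (u v : E -> V) : {set {set V + E}} :=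
  [set [set inl (u e); inl (v e); inr e] | e : E].

Definition adj (V E : finType) (u v : E -> V) (A : {set E}) : rel V :=
  fun x y => [exists e in A, ((u e == x) && (v e == y)) || ((u e == y) && (v e == x))].

Definition ncomp (V E : finType) (u v : E -> V) (A : {set E}) : nat :=
  n_comp (adj u v A) V.

Definition rk (V E : finType) (u v : E -> V) (A : {set E}) : nat :=
  #|V| - ncomp u v A.

Local Open Scope ring_scope.

(* Tutte polynomial evaluated at (x, y) in a commutative ring R. The exponents
   r(E) - r(A) and |A| - r(A) are always nonnegative. *)
Definition tutte (R : comNzRingType) (V E : finType) (u v : E -> V) (x y : R) : R :=
  \sum_(A : {set E})
     (x - 1) ^+ (rk u v [set: E] - rk u v A)%N * (y - 1) ^+ (#|A| - rk u v A)%N.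

(* Main.v *)
Require Import Defs.
From HB Require Import structures.
From mathcomp Require Import all_boot all_order all_algebra.
Import Order.TTheory GRing.Theory Num.Theory.
From mathcomp Require Import zify ring.
Set Implicit Arguments. Unset Strict Implicit. Unset Printing Implicit Defensive.


Section Count.
Variables (V E : finType) (u v : E -> V).

Definition Hset (K : finType) (A : {set E}) : {set {ffun V -> K}} :=
  [set f : {ffun V -> K} | [forall e in A, f (u e) == f (v e)]].

Lemma adj_sym A : symmetric (adj u v A).
Proof.
move=> x y; rewrite /adj; apply/existsP/existsP => -[e /andP[eA h]]; exists e;
  by rewrite eA /= orbC.
Qed.

Lemma csym A : connect_sym (adj u v A).
Proof. exact: sym_connect_sym (adj_sym A). Qed.

Lemma H_const (K : finType) A (f : {ffun V -> K}) :
  f \in Hset K A -> forall x, f x = f (fingraph.root (adj u v A) x).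
Proof.
rewrite inE => /forall_inP hf x.
have cl : closed (adj u v A) [pred y | f y == f x].
  move=> y z /existsP[e /andP[eA /orP[/andP[/eqP<- /eqP<-]|/andP[/eqP<- /eqP<-]]]];
    by rewrite !inE (eqP (hf e eA)).
have := closed_connect cl (connect_root _ x).
by rewrite !inE eqxx => /esym/eqP.
Qed.

Definition Rt A := {x : V | roots (adj u v A) x}.

Definition rsig A (x : V) : Rt A := exist _ (fingraph.root (adj u v A) x) (roots_root (csym A) x).

Definition Phi (K : finType) A (g : {ffun Rt A -> K}) : {ffun V -> K} :=
  [ffun x => g (rsig A x)].

Lemma Phi_inj K A : injective (@Phi K A).
Proof.
move=> g1 g2 h; apply/ffunP => r.
have : rsig A (val r) = r by apply: val_inj; rewrite /= (eqP (valP r)).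
move=> <-; have := congr1 (fun f : {ffun V -> K} => f (val r)) h; by rewrite /= !ffunE.
Qed.

Lemma card_H (K : finType) A : #|Hset K A| = (#|K| ^ ncomp u v A)%N.
Proof.
have -> : Hset K A = @Phi K A @: setT.
  apply/setP => f; apply/idP/imsetP.
    move=> fH; exists [ffun r : Rt A => f (val r)]; first by [].
    by apply/ffunP => x; rewrite !ffunE /= -H_const.
  move=> [g _ ->]; rewrite inE; apply/forall_inP => e eA; rewrite !ffunE.
  suff -> : rsig A (u e) = rsig A (v e) by [].
  apply: val_inj => /=; apply/eqP; rewrite (root_connect (csym A)).
  apply: connect1; apply/existsP; exists e; by rewrite eA !eqxx.
rewrite card_imset; last exact: Phi_inj.
rewrite cardsT card_ffun card_sig /ncomp /n_comp_mem; congr (_ ^ _)%N.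
by apply: eq_card => x; rewrite !inE andbT.
Qed.

End Count.
Section Ineq.
Variables (V E : finType) (u v : E -> V).

Definition Hs (s : seq E) : {set {ffun V -> bool}} :=
  [set f : {ffun V -> bool} | all (fun e => f (u e) == f (v e)) s].

Lemma Hs_step e s : #|Hs s| <= 2 * #|Hs (e :: s)|.
Proof.
set D := [set f in Hs s | f (u e) != f (v e)].
have -> : Hs s = Hs (e :: s) :|: D.
  apply/setP => f; rewrite !inE /=; by case: (f (u e) == f (v e)); rewrite ?andbT ?andbF ?orbF.
apply: (leq_trans (leq_card_setU _ _)); rewrite mul2n -addnn leq_add2l.
have [->|/set0Pn [g gD]] := eqVneq D set0; first by rewrite cards0.
pose xg (h : {ffun V -> bool}) : {ffun V -> bool} := [ffun x => h x (+) g x].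
have xinj : injective xg.
  move=> h1 h2 eq; apply/ffunP => x.
  have := congr1 (fun f : {ffun V -> bool} => f x) eq; rewrite /= !ffunE.
  by move/(congr1 (addb^~ (g x))); rewrite !addbK.
rewrite -(card_imset _ xinj); apply: subset_leq_card; apply/subsetP => _ /imsetP[h hD ->].
move: hD gD; rewrite !inE => /andP[hs hn] /andP[gs gn].
apply/andP; split.
  rewrite !ffunE; move: hn gn; by case: (h (u e)); case: (h (v e)); case: (g (u e)); case: (g (v e)).
apply/allP => e' e's; rewrite !ffunE.
by rewrite (eqP (allP hs e' e's)) (eqP (allP gs e' e's)).
Qed.

Lemma Hs_bound s : 2 ^ #|V| <= 2 ^ size s * #|Hs s|.
Proof.
elim: s => [|e s IH].
  rewrite expn0 mul1n; apply: eq_leq.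
  have -> : Hs [::] = setT by apply/setP => f; rewrite !inE.
  by rewrite cardsT card_ffun card_bool.
apply: (leq_trans IH); rewrite /= expnS (mulnC 2) -mulnA; exact: leq_mul (leqnn _) (Hs_step e s).
Qed.

Lemma HsE (A : {set E}) : Hs (enum A) = Hset u v bool A.
Proof.
apply/setP => f; rewrite !inE; apply/allP/forall_inP => h e; rewrite ?mem_enum => he; apply: h; rewrite ?mem_enum //.
Qed.

Lemma ncomp_le (A : {set E}) : ncomp u v A <= #|V|.
Proof.
rewrite -(@leq_exp2l 2) // -{1}(card_bool) -card_H -(card_bool) -card_ffun.
exact: max_card.
Qed.

Lemma ncomp_mono (A : {set E}) : ncomp u v [set: E] <= ncomp u v A.
Proof.
rewrite -(@leq_exp2l 2) // -(card_bool) -!card_H; apply: subset_leq_card.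
apply/subsetP => f; rewrite !inE => /forall_inP h; apply/forall_inP => e _; exact: h.
Qed.

Lemma ncomp_rk (A : {set E}) : #|V| <= #|A| + ncomp u v A.
Proof.
have h : 2 ^ ncomp u v A = #|Hset u v bool A| by rewrite card_H card_bool.
rewrite -(@leq_exp2l 2) // expnD h -HsE cardE.
exact: Hs_bound.
Qed.

End Ineq.
Local Open Scope ring_scope.

Lemma prod_bool (I : finType) (P : pred I) (Q : pred I) :
  \prod_(i | P i) ((Q i)%:R : rat) = ([forall i, P i ==> Q i])%:R.
Proof.
case: (boolP [forall i, P i ==> Q i]) => [/forallP h|/forallPn[i]].
  by apply: big1 => i Pi; have := h i; rewrite Pi /= => ->.
rewrite negb_imply => /andP[Pi nQ]; rewrite (bigD1 i) //= (negbTE nQ) mul0r //.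
Qed.

Lemma card3 (K : finType) (a b c : K) :
  (1 < #|[set a; b; c]|)%N = ~~ ((a == b) && (a == c)).
Proof.
apply/card_gt1P/idP.
  move=> [x [y [xS yS xy]]]; apply/negP => /andP[/eqP ab /eqP ac].
  move: xS yS xy; rewrite !inE -ab -ac !orbb => /eqP-> /eqP->; by rewrite eqxx.
case: (eqVneq a b) => [ab|ab] /=.
  move=> ac; exists a, c; by rewrite !inE !eqxx ac !orbT.
by move=> _; exists a, b; rewrite !inE !eqxx ab !orbT.
Qed.

Section Col.
Variables (V E : finType) (u v : E -> V) (lam : nat).
Notation K := ('I_lam).

Definition ok3 (a b c : K) := ~~ ((a == b) && (a == c)).

Lemma wpE (phi : {ffun V + E -> K}) :
  weak_proper (HG_edges u v) phi =
  [forall e, ok3 (phi (inl (u e))) (phi (inl (v e))) (phi (inr e))].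
Proof.
apply/forall_inP/forallP => h.
  move=> e; have hS : [set inl (u e); inl (v e); inr e] \in HG_edges u v by apply/imsetP; exists e.
  have := h _ hS; rewrite /ok3 -card3.
  by rewrite !imsetU ?imsetU1 !imset_set1.
move=> _ /imsetP[e _ ->]; rewrite !imsetU ?imsetU1 !imset_set1 card3; exact: (h e).
Qed.

Definition join (p : {ffun V -> K} * {ffun E -> K}) : {ffun V + E -> K} :=
  [ffun x => match x with inl a => p.1 a | inr b => p.2 b end].
Definition splt (phi : {ffun V + E -> K}) : {ffun V -> K} * {ffun E -> K} :=
  ([ffun a => phi (inl a)], [ffun b => phi (inr b)]).

Lemma join_bij : bijective join.
Proof.
exists splt.
  by case=> f g; congr (_, _); apply/ffunP => x; rewrite !ffunE.
by move=> phi; apply/ffunP => -[a|b]; rewrite !ffunE.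
Qed.

Lemma sum_ok3 (a b : K) :
  \sum_(c : K) ((ok3 a b c)%:R : rat) = lam%:R - (a == b)%:R.
Proof.
rewrite /ok3; case: (eqVneq a b) => [ab|ab] /=; first subst b.
  rewrite (bigD1 a) //= eqxx /= add0r.
  have -> : \sum_(c | c != a) ((~~ (a == c))%:R : rat) = \sum_(c | c != a) 1.
    by apply: eq_bigr => c ca; rewrite eq_sym ca.
  rewrite sumr_const cardC1 card_ord.
  by case: lam a => [[]//|n a]; rewrite /= -natr1 addrK.
by rewrite sumr_const card_ord subr0.
Qed.

Lemma chrom_sum :
  ((chrom_hyp (HG_edges u v) lam)%:R : rat) =
  \sum_(f : {ffun V -> K}) \prod_(e : E) (lam%:R - (f (u e) == f (v e))%:R).
Proof.
rewrite /chrom_hyp -sum1_card natr_sum.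
rewrite (big_mkcond (fun phi => phi \in _)).
under eq_bigr => phi _ do rewrite inE wpE -[X in if X then _ else _]/(_ : bool).
rewrite (reindex join); last by apply: onW_bij; exact: join_bij.
transitivity (\sum_(f : {ffun V -> K}) \sum_(g : {ffun E -> K})
   (if [forall e, ok3 (join (f, g) (inl (u e))) (join (f, g) (inl (v e))) (join (f, g) (inr e))] then 1 else 0 : rat)).
  by rewrite pair_bigA.
apply: eq_bigr => f _.
transitivity (\sum_(g : {ffun E -> K}) \prod_(e : E) ((ok3 (f (u e)) (f (v e)) (g e))%:R : rat)).
  apply: eq_bigr => g _; rewrite (prod_bool predT) /=.
  have -> : [forall e, ok3 (join (f, g) (inl (u e))) (join (f, g) (inl (v e))) (join (f, g) (inr e))]
    = [forall e, predT e ==> ok3 (f (u e)) (f (v e)) (g e)].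
    apply: eq_forallb => e; by rewrite !ffunE.
  by case: ifP.
rewrite -(bigA_distr_bigA (fun e c => ((ok3 (f (u e)) (f (v e)) c)%:R : rat))).
by apply: eq_bigr => e _; rewrite sum_ok3.
Qed.

End Col.
Section Expand.
Variables (V E : finType) (u v : E -> V) (lam : nat).

Lemma lhs_expand :
  \sum_(f : {ffun V -> 'I_lam}) \prod_(e : E) ((lam%:R : rat) - (f (u e) == f (v e))%:R) =
  \sum_(J : {set E}) ((-1) ^+ #|J| * (lam%:R : rat) ^+ (#|E| - #|J|)%N * (lam%:R) ^+ ncomp u v J).
Proof.
under eq_bigr => f _ do under eq_bigr => e _ do rewrite addrC.
under eq_bigr => f _ do rewrite bigA_distr.
rewrite exchange_big /=; apply: eq_bigr => J _.
transitivity (\sum_(f : {ffun V -> 'I_lam})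
   ((-1) ^+ #|J| * (lam%:R : rat) ^+ (#|E| - #|J|)%N *
     ([forall e, (e \in J) ==> (f (u e) == f (v e))])%:R)).
  apply: eq_bigr => f _; rewrite (bigID (fun e => e \in J)) /=.
  rewrite (eq_bigr (fun e => - ((f (u e) == f (v e))%:R : rat))); last by move=> e ->.
  rewrite (eq_bigr (fun e => (lam%:R : rat))); last by move=> e /negbTE ->.
  rewrite prodrN prodr_const -prod_bool.
  have -> : #|[pred e | e \notin J]| = (#|E| - #|J|)%N.
    rewrite -(cardsC J) addKn; apply: eq_card => e; by rewrite !inE.
  by rewrite mulrAC.
rewrite -mulr_sumr; congr (_ * _); rewrite -natrX.
have -> : (lam ^ ncomp u v J)%N = #|Hset u v 'I_lam J| by rewrite card_H card_ord.
rewrite -sum1_card natr_sum [RHS]big_mkcond.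
apply: eq_bigr => f _; rewrite inE.
have -> : [forall e in J, f (u e) == f (v e)] = [forall e, (e \in J) ==> (f (u e) == f (v e))] by [].
by case: ifP.
Qed.

End Expand.
Lemma term_id (L : rat) (m n c cJ j : nat) (hL : L != 0)
  (h1 : (c <= cJ)%N) (h2 : (cJ <= n)%N) (h4 : (n <= j + cJ)%N) (h5 : (j <= m)%N) :
  (-1) ^+ j * L ^+ (m - j)%N * L ^+ cJ =
  L ^ (m%:Z - n%:Z + 2 * c%:Z) * (-1) ^+ (n + c)%N
  * ((1 - L ^+ 2) - 1) ^+ ((n - c) - (n - cJ))%N * ((L - 1) / L - 1) ^+ (j - (n - cJ))%N.
Proof.
have -> : ((n - c) - (n - cJ))%N = (cJ - c)%N by lia.
have -> : (j - (n - cJ))%N = (j + cJ - n)%N by lia.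
set a := (cJ - c)%N; set b := (j + cJ - n)%N.
have -> : (1 - L ^+ 2) - 1 = - (L ^+ 2) by rewrite addrC addKr.
have -> : (L - 1) / L - 1 = - L^-1 by field.
have -> : m%:Z - n%:Z + 2 * c%:Z = (m + 2 * c)%N%:Z + (- (n%:Z)).
  by rewrite PoszD PoszM; ring.
rewrite expfzDr // -exprnN (exprNn (L ^+ 2) a) (exprNn (L^-1) b) exprVn.
have hs : ((-1 : rat) ^+ (n + c)%N * (-1) ^+ a * (-1) ^+ b) = (-1) ^+ j.
  rewrite -!exprD (_ : (n + c + a + b)%N = (j + 2 * cJ)%N); last by rewrite /a /b; lia.
  by rewrite exprD exprM sqrrN -exprM expr1n mulr1.
have hp : L ^+ (m + 2 * c)%N * L ^+ (2 * a)%N = L ^+ (m - j)%N * L ^+ cJ * L ^+ n * L ^+ b.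
  rewrite -!exprD; congr (_ ^+ _); rewrite /a /b; lia.
have hn : L ^+ n != 0 by rewrite expf_neq0.
have hb : L ^+ b != 0 by rewrite expf_neq0.
rewrite -[L ^ (m + 2 * c)%N]/(L ^+ (m + 2 * c)) -exprM.
transitivity ((-1) ^+ j * (L ^+ (m + 2 * c) * L ^+ (2 * a)) / (L ^+ n * L ^+ b)).
  rewrite hp; field; by rewrite hn hb.
rewrite -hs; field; by rewrite hn hb.
Qed.

Theorem theorem2 (V E : finType) (u v : E -> V) (lam : nat) (hlam : (0 < lam)%N) :
  ((chrom_hyp (HG_edges u v) lam)%:R : rat) =
    (lam%:R : rat) ^ (#|E|%:Z - #|V|%:Z + 2 * (ncomp u v [set: E])%:Z)
    * (-1) ^+ (#|V| + ncomp u v [set: E])%N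
    * tutte u v (1 - (lam%:R : rat) ^+ 2) (((lam%:R : rat) - 1) / lam%:R).
Proof.
rewrite chrom_sum lhs_expand /tutte mulr_sumr; apply: eq_bigr => J _.
rewrite /rk !mulrA; apply: term_id.
- by rewrite pnatr_eq0 -lt0n.
- exact: ncomp_mono.
- exact: ncomp_le.
- exact: ncomp_rk.
- exact: max_card.
Qed.
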